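(* Let $\mathcal{C}$ be a small elegant Reedy category, with face maps the morphisms of $\mathcal{C}^+$ and degeneracy maps the morphisms of $\mathcal{C}^-$. Assume the following for every face map $f\colon a\to c$ and every morphism $g\colon b\to c$ of $\mathcal{C}$: - a pullback of $f$ along $g$ exists in $\mathcal{C}$; - in this pullback square, the base change of $f$ along $g$ is a face map; - the base change of $g$ along $f$ is a face map if $g$ is a face map, and a degeneracy map if $g$ is a degeneracy map. Then the functor $\operatorname{colim}\colon \widehat{\mathcal{C}}\to\mathbf{Set}$ preserves monomorphisms.
   Context: A Reedy category is a category $\mathcal{C}$ with a degree function on objects and wide subcategories $\mathcal{C}^+$ (face maps, which raise degree unless identities) and $\mathcal{C}^-$ (degeneracy maps, which lower degree unless identities), such that every morphism factors uniquely as a degeneracy map followed by a face map. It is elegant (in the sense of Bergner–Rezk) if for every presheaf $X$ on $\mathcal{C}$ and every $x\in X(r)$ there is a unique pair $(\sigma\colon r\to s,\ y\in X(s))$ with $\sigma$ a degeneracy map, $y$ nondegenerate and $x=\sigma^* y$; here $y$ is nondegenerate if it is not of the form $\tau^*z$ for a non-identity degeneracy map $\tau$. $\widehat{\mathcal{C}}$ denotes presheaves of sets on $\mathcal{C}$. The colimit of a presheaf is the set of connected components of its category of elements. *)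

(* Defs.v *)
From Stdlib Require Import Relations Relation_Operators.


Record Category := {
  Ob :> Type;
  Hom : Ob -> Ob -> Type;
  idm : forall a, Hom a a;
  comp : forall a b c, Hom b c -> Hom a b -> Hom a c;
  comp_id_l : forall a b (f : Hom a b), comp a b b (idm b) f = f;
  comp_id_r : forall a b (f : Hom a b), comp a a b f (idm a) = f;
  comp_assoc : forall a b c d (f : Hom a b) (g : Hom b c) (h : Hom c d),
      comp a c d h (comp a b c g f) = comp a b d (comp b c d h g) f
}.

Arguments Hom {c0} a b.
Arguments idm {c0} a.
Arguments comp {c0 a b c} g f.

Definition IsId (C : Category) (a b : C) (f : Hom a b) : Prop :=
  exists p : a = b,
    match p in _ = b' return Hom a b' with eq_refl => idm a end = f.
Arguments IsId {C a b} f.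

Definition WideSub (C : Category) (P : forall a b : C, Hom a b -> Prop) : Prop :=
  (forall a, P a a (idm a)) /\
  (forall a b c (f : Hom a b) (g : Hom b c), P a b f -> P b c g -> P a c (comp g f)).

Arguments WideSub {C} P.

Record Reedy (C : Category) := {
  deg : C -> nat;
  face : forall a b : C, Hom a b -> Prop;
  degen : forall a b : C, Hom a b -> Prop;
  face_wide : WideSub face;
  degen_wide : WideSub degen;
  face_raise : forall a b (f : Hom a b), face a b f -> IsId f \/ deg a < deg b;
  degen_lower : forall a b (f : Hom a b), degen a b f -> IsId f \/ deg b < deg a;
  factor_exists : forall a c (f : Hom a c),
      exists b (s : Hom a b) (d : Hom b c), degen a b s /\ face b c d /\ f = comp d s;
  factor_unique : forall a c b (s : Hom a b) (d : Hom b c) b' (s' : Hom a b') (d' : Hom b' c),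
      degen a b s -> face b c d -> degen a b' s' -> face b' c d' -> comp d s = comp d' s' ->
      existT (fun b0 => (Hom a b0 * Hom b0 c)%type) b (s, d) =
      existT (fun b0 => (Hom a b0 * Hom b0 c)%type) b' (s', d')
}.

Arguments deg {C} r _.
Arguments face {C} r {a b} f.
Arguments degen {C} r {a b} f.

Record Presheaf (C : Category) := {
  PF :> C -> Type;
  act : forall a b : C, Hom a b -> PF b -> PF a;
  act_id : forall a (x : PF a), act a a (idm a) x = x;
  act_comp : forall a b c (f : Hom a b) (g : Hom b c) (x : PF c),
      act a c (comp g f) x = act a b f (act b c g x)
}.

Arguments act {C} p {a b} f x.

Definition Nondeg (C : Category) (R : Reedy C) (X : Presheaf C) (s : C) (y : X s) : Prop :=
  ~ exists (t : C) (tau : Hom s t) (z : X t), degen R tau /\ ~ IsId tau /\ y = act X tau z.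

Arguments Nondeg {C} R X {s} y.

Definition Elegant (C : Category) (R : Reedy C) : Prop :=
  forall (X : Presheaf C) (r : C) (x : X r),
    (exists (s : C) (sigma : Hom r s) (y : X s),
        degen R sigma /\ Nondeg R X y /\ x = act X sigma y) /\
    (forall s (sigma : Hom r s) (y : X s) s' (sigma' : Hom r s') (y' : X s'),
        degen R sigma -> Nondeg R X y -> x = act X sigma y ->
        degen R sigma' -> Nondeg R X y' -> x = act X sigma' y' ->
        existT (fun s0 => (Hom r s0 * X s0)%type) s (sigma, y) =
        existT (fun s0 => (Hom r s0 * X s0)%type) s' (sigma', y')).

(* (p, pa, pb) is a pullback of f : a -> c along g : b -> c:
   f o pa = g o pb and universal. pb is the base change of f along g,
   pa is the base change of g along f. *)
Definition IsPullback (C : Category) (a b c p : C) (f : Hom a c) (g : Hom b c)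
    (pa : Hom p a) (pb : Hom p b) : Prop :=
  comp f pa = comp g pb /\
  forall (q : C) (u : Hom q a) (v : Hom q b), comp f u = comp g v ->
    exists h : Hom q p, (comp pa h = u /\ comp pb h = v) /\
      forall h' : Hom q p, comp pa h' = u -> comp pb h' = v -> h' = h.

Arguments Elegant {C} R.
Arguments IsPullback {C a b c p} f g pa pb.

Record NatTrans (C : Category) (X Y : Presheaf C) := {
  comp_nt :> forall a : C, X a -> Y a;
  natural : forall a b (f : Hom a b) (y : X b),
      comp_nt a (act X f y) = act Y f (comp_nt b y)
}.

Arguments NatTrans {C} X Y.
Arguments comp_nt {C X Y} n a _.
Arguments natural {C X Y} n a b f y.

Definition MonoPsh (C : Category) (X Y : Presheaf C) (alpha : NatTrans X Y) : Prop :=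
  forall (Z : Presheaf C) (beta gamma : NatTrans Z X),
    (forall a (z : Z a), alpha a (beta a z) = alpha a (gamma a z)) ->
    forall a (z : Z a), beta a z = gamma a z.

Arguments MonoPsh {C X Y} alpha.

(* Category of elements and its connected components:
   colim X = (sigT X) / ConnEl X. *)
Definition ElArrow (C : Category) (X : Presheaf C) (e1 e2 : {a : C & X a}) : Prop :=
  exists f : Hom (projT1 e1) (projT1 e2), act X f (projT2 e2) = projT2 e1.

Arguments ElArrow {C} X e1 e2.

Definition ConnEl (C : Category) (X : Presheaf C) : relation {a : C & X a} :=
  clos_refl_sym_trans _ (ElArrow X).

Arguments ConnEl {C} X _ _.

(* the map on elements induced by alpha; it descends to colim alpha *)
Definition el_map (C : Category) (X Y : Presheaf C) (alpha : NatTrans X Y)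
    (e : {a : C & X a}) : {a : C & Y a} :=
  existT (fun a => Y a) (projT1 e) (alpha (projT1 e) (projT2 e)).

Arguments el_map {C X Y} alpha e.

(* colim alpha : colim X -> colim Y is injective (= mono in Set) *)
Definition ColimInjective (C : Category) (X Y : Presheaf C) (alpha : NatTrans X Y) : Prop :=
  forall e1 e2, ConnEl Y (el_map alpha e1) (el_map alpha e2) -> ConnEl X e1 e2.

Arguments ColimInjective {C X Y} alpha.

(* Main.v *)
Require Import Defs.
From Stdlib Require Import Relations Relation_Operators Lia ClassicalEpsilon ProofIrrelevance Classical Eqdep.

Lemma sig_eq_pi {A : Type} {P : A -> Prop} (x y : sig P) :
  proj1_sig x = proj1_sig y -> x = y.
Proof.
  destruct x as [x px], y as [y py]; simpl; intros ->.
  f_equal; apply proof_irrelevance.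
Qed.

Lemma no_degen_retract (C : Category) (R : Reedy C) (b t : C) (tau : Hom b t)
  (h : Hom t b) : degen R tau -> ~ IsId tau -> comp h tau = idm b -> False.
Proof.
  intros Dt Nt E.
  destruct (factor_exists _ R _ _ h) as [m [hm [hp [Dm [Fp Eh]]]]].
  subst h.
  assert (E2 : comp hp (comp hm tau) = comp (idm b) (idm b)).
  { rewrite comp_id_l, comp_assoc; exact E. }
  assert (Dc : degen R (comp hm tau)).
  { apply (proj2 (degen_wide _ R)); assumption. }
  pose proof (factor_unique _ R _ _ _ _ _ _ _ _ Dc Fp
     (proj1 (degen_wide _ R) b) (proj1 (face_wide _ R) b) E2) as U.
  apply (f_equal (@projT1 _ _)) in U; simpl in U. subst m.
  destruct (degen_lower _ R _ _ tau Dt) as [I|L]; [contradiction|].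
  destruct (degen_lower _ R _ _ hm Dm) as [[p _]|L2].
  - subst t. lia.
  - lia.
Qed.

Definition Fs (C : Category) (a b : C) (s : Hom a b) (c : C) (h : Hom c b) : Prop :=
  exists k : Hom c a, comp s k = h.

Definition nrm (C : Category) (a b : C) (s : Hom a b) (c : C) (h : Hom c b) (i : bool) : bool :=
  match excluded_middle_informative (Fs C a b s c h) with left _ => false | right _ => i end.

Lemma nrm_ok C a b s c h i : Fs C a b s c h -> nrm C a b s c h i = false.
Proof. unfold nrm; destruct excluded_middle_informative; tauto. Qed.

Lemma nrm_no C a b s c h i : ~ Fs C a b s c h -> nrm C a b s c h i = i.
Proof. unfold nrm; destruct excluded_middle_informative; tauto. Qed.

Definition PPF (C : Category) (a b : C) (s : Hom a b) (c : C) : Type :=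
  { p : Hom c b * bool | Fs C a b s c (fst p) -> snd p = false }.

Definition Pact (C : Category) (a b : C) (s : Hom a b) (c d : C) (f : Hom c d)
  (x : PPF C a b s d) : PPF C a b s c :=
  exist _ (comp (fst (proj1_sig x)) f, nrm C a b s c (comp (fst (proj1_sig x)) f) (snd (proj1_sig x)))
    (nrm_ok C a b s c _ _).

Lemma Pact_id C a b s c (x : PPF C a b s c) : Pact C a b s c c (idm c) x = x.
Proof.
  apply sig_eq_pi. destruct x as [[h i] px]; simpl in *.
  rewrite comp_id_r. f_equal.
  destruct (classic (Fs C a b s c h)) as [F|F].
  - rewrite nrm_ok by exact F. symmetry; exact (px F).
  - apply nrm_no; exact F.
Qed.

Lemma Pact_comp C a b s c d e (f : Hom c d) (g : Hom d e) (x : PPF C a b s e) :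
  Pact C a b s c e (comp g f) x = Pact C a b s c d f (Pact C a b s d e g x).
Proof.
  apply sig_eq_pi. destruct x as [[h i] px]; simpl in *.
  rewrite comp_assoc. f_equal.
  destruct (classic (Fs C a b s c (comp (comp h g) f))) as [F|F].
  - rewrite !nrm_ok by exact F. reflexivity.
  - assert (F2 : ~ Fs C a b s d (comp h g)).
    { intros [k Hk]. apply F. exists (comp k f).
      rewrite comp_assoc, Hk. reflexivity. }
    rewrite (nrm_no C a b s d (comp h g) i F2). reflexivity.
Qed.

Definition Ppsh (C : Category) (a b : C) (s : Hom a b) : Presheaf C :=
  Build_Presheaf C (PPF C a b s) (Pact C a b s) (Pact_id C a b s) (Pact_comp C a b s).

Lemma degen_section (C : Category) (R : Reedy C) : Elegant R ->
  forall a b (s : Hom a b), degen R s -> exists t : Hom b a, comp s t = idm b.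
Proof.
  intros El a b s Ds.
  destruct (classic (exists t : Hom b a, comp s t = idm b)) as [H|H]; [exact H|].
  exfalso.
  set (X := Ppsh C a b s).
  set (x0 := exist (fun p : Hom b b * bool => Fs C a b s b (fst p) -> snd p = false)
               (idm b, false) (fun _ => eq_refl) : X b).
  assert (p1 : Fs C a b s b (fst (idm b, true)) -> snd (idm b, true) = false).
  { intro F; exfalso; exact (H F). }
  set (x1 := exist (fun p : Hom b b * bool => Fs C a b s b (fst p) -> snd p = false)
               (idm b, true) p1 : X b).
  assert (Fsa : Fs C a b s a (comp (idm b) s)).
  { exists (idm a). rewrite comp_id_l, comp_id_r; reflexivity. }
  assert (E : act X s x0 = act X s x1).
  { apply sig_eq_pi; simpl. rewrite !nrm_ok by exact Fsa. reflexivity. }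
  assert (ND : forall y : X b, fst (proj1_sig y) = idm b -> Nondeg R X y).
  { intros y Hy [t [tau [z [Dt [Nt Ez]]]]].
    apply (f_equal (fun w => fst (proj1_sig w))) in Ez. simpl in Ez.
    rewrite Hy in Ez.
    exact (no_degen_retract C R b t tau _ Dt Nt (eq_sym Ez)). }
  destruct (El X a (act X s x0)) as [_ U].
  pose proof (U b s x0 b s x1 Ds (ND x0 eq_refl) eq_refl Ds (ND x1 eq_refl) E) as U'.
  apply inj_pair2 in U'.
  apply (f_equal (fun w => snd (proj1_sig (snd w)))) in U'. simpl in U'. discriminate.
Qed.

Definition SpanEl (C : Category) (Y : Presheaf C) (e1 e2 : {a : C & Y a}) : Prop :=
  exists c (f : Hom c (projT1 e1)) (g : Hom c (projT1 e2)),
    act Y f (projT2 e1) = act Y g (projT2 e2).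

Lemma conn_span (C : Category) (R : Reedy C) : Elegant R ->
  (forall (a b c : C) (f : Hom a c) (g : Hom b c), face R f ->
     exists (p : C) (pa : Hom p a) (pb : Hom p b),
       IsPullback f g pa pb /\
       face R pb /\
       (face R g -> face R pa) /\
       (degen R g -> degen R pa)) ->
  forall (Y : Presheaf C) e1 e2, ConnEl Y e1 e2 -> SpanEl C Y e1 e2.
Proof.
  intros El PB Y e1 e2 H. induction H as [x y [f Hf]| x | x y _ IH | x y z _ IH1 _ IH2].
  - exists (projT1 x), (idm _), f. rewrite act_id. symmetry; exact Hf.
  - exists (projT1 x), (idm _), (idm _). reflexivity.
  - destruct IH as [c [f [g E]]]. exists c, g, f. symmetry; exact E.
  - destruct x as [a1 y1], y as [a2 y2], z as [a3 y3]; simpl in *.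
    destruct IH1 as [c [f1 [g1 E1]]], IH2 as [c' [f2 [g2 E2]]]; simpl in *.
    destruct (factor_exists _ R _ _ g1) as [m [gm [gp [Dm [Fp Eg]]]]].
    destruct (degen_section C R El _ _ gm Dm) as [t Ht].
    destruct (PB _ _ _ gp f2 Fp) as [P [pa [pb [[Esq _] _]]]].
    exists P, (comp f1 (comp t pa)), (comp g2 pb). simpl.
    rewrite !act_comp, E1, <- E2, <- !act_comp.
    f_equal. rewrite <- Esq, Eg, comp_assoc. f_equal.
    rewrite <- comp_assoc, Ht, comp_id_r. reflexivity.
Qed.

Lemma mono_inj (C : Category) (X Y : Presheaf C) (alpha : NatTrans X Y) :
  MonoPsh alpha -> forall a (x y : X a), alpha a x = alpha a y -> x = y.
Proof.
  intros M a x y Exy.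
  set (ZF := fun c => { p : X c * X c | alpha c (fst p) = alpha c (snd p) }).
  assert (ok : forall c d (f : Hom c d) (p : ZF d),
     alpha c (fst (act X f (fst (proj1_sig p)), act X f (snd (proj1_sig p)))) =
     alpha c (snd (act X f (fst (proj1_sig p)), act X f (snd (proj1_sig p))))).
  { intros c d f [[u v] e]; simpl in *. rewrite !natural, e. reflexivity. }
  set (zact := fun c d (f : Hom c d) (p : ZF d) =>
     exist _ (act X f (fst (proj1_sig p)), act X f (snd (proj1_sig p))) (ok c d f p) : ZF c).
  assert (zid : forall c (p : ZF c), zact c c (idm c) p = p).
  { intros c p; apply sig_eq_pi; destruct p as [[u v] e]; simpl. rewrite !act_id; reflexivity. }
  assert (zcomp : forall c d e (f : Hom c d) (g : Hom d e) (p : ZF e),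
     zact c e (comp g f) p = zact c d f (zact d e g p)).
  { intros c d e f g p; apply sig_eq_pi; destruct p as [[u v] q]; simpl. rewrite !act_comp; reflexivity. }
  set (Z := Build_Presheaf C ZF zact zid zcomp).
  assert (n1 : forall c d (f : Hom c d) (p : Z d),
     fst (proj1_sig (act Z f p)) = act X f (fst (proj1_sig p))) by reflexivity.
  assert (n2 : forall c d (f : Hom c d) (p : Z d),
     snd (proj1_sig (act Z f p)) = act X f (snd (proj1_sig p))) by reflexivity.
  set (beta := Build_NatTrans C Z X (fun c p => fst (proj1_sig p)) n1).
  set (gamma := Build_NatTrans C Z X (fun c p => snd (proj1_sig p)) n2).
  assert (Hbg : forall c (z : Z c), alpha c (beta c z) = alpha c (gamma c z)).
  { intros c [[u v] e]; exact e. }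
  exact (M Z beta gamma Hbg a (exist _ (x, y) Exy)).
Qed.

Theorem mainTheorem7 (C : Category) (R : Reedy C) :
  Elegant R ->
  (forall (a b c : C) (f : Hom a c) (g : Hom b c), face R f ->
     exists (p : C) (pa : Hom p a) (pb : Hom p b),
       IsPullback f g pa pb /\
       face R pb /\
       (face R g -> face R pa) /\
       (degen R g -> degen R pa)) ->
  forall (X Y : Presheaf C) (alpha : NatTrans X Y),
    MonoPsh alpha -> ColimInjective alpha.
Proof.
  intros El PB X Y alpha M [a1 x1] [a2 x2] H.
  destruct (conn_span C R El PB Y _ _ H) as [c [f [g E]]]; simpl in *.
  rewrite <- !natural in E.
  apply (mono_inj C X Y alpha M) in E.
  apply rst_trans with (existT (fun a => X a) c (act X f x1)).
  - apply rst_sym, rst_step. exists f. reflexivity.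
  - apply rst_step. exists g. simpl. symmetry; exact E.
Qed.
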